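(* Let $n\ge4$. (i) A polyphenyl hexagonal chain $\overline{G}_n$ with $n$ hexagons has the minimum (respectively, second minimal, third minimal) Wiener index among all polyphenyl hexagonal chains with $n$ hexagons if and only if its hexagonal squeeze $G_n$ has the minimum (respectively, second minimal, third minimal) Wiener index among all spiro hexagonal chains with $n$ hexagons. (ii) $\overline{G}_n$ has the maximum (respectively, second maximal, third maximal) Wiener index among all polyphenyl hexagonal chains with $n$ hexagons if and only if $G_n$ has the maximum (respectively, second maximal, third maximal) Wiener index among all spiro hexagonal chains with $n$ hexagons.
   Context: The Wiener index is $W(G)=\sum_{\{u,v\}\subseteq V(G)}d_G(u,v)$, $d_G$ the shortest-path distance. A spiro hexagonal chain with $n$ hexagons is a connected graph whose blocks are $n$ hexagons (6-cycles) $H_0,\dots,H_{n-1}$, where $H_{k-1}$ and $H_k$ share exactly one cut-vertex for $1\le k\le n-1$, each cut-vertex is shared by exactly two hexagons and each hexagon has at most two cut-vertices. A polyphenyl hexagonal chain $\overline{G}_n=\overline{H}_0\cdots\overline{H}_{n-1}$ consists of pairwise vertex-disjoint hexagons together with cut-edges: $\overline{G}_1=\overline{H}_0$, and for $k\ge1$, $\overline{G}_{k+1}$ is obtained from $\overline{G}_k$ by adding $\overline{H}_k$ and a cut-edge joining a vertex $c_k$ of $\overline{H}_k$ to a vertex $t_k$ of $\overline{H}_{k-1}$, with $t_k\ne c_{k-1}$ for $k\ge2$. The hexagonal squeeze of $\overline{G}_n$ is the spiro hexagonal chain obtained by contracting each cut-edge $c_kt_k$ to a vertex; this gives a bijection (up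 to isomorphism) between polyphenyl and spiro hexagonal chains with $n$ hexagons. Chains are considered up to isomorphism. *)

(* Defs.v *)
From mathcomp Require Import all_boot.
Set Implicit Arguments. Unset Strict Implicit. Unset Printing Implicit Defensive.

(** * Generic graph notions: a graph is a vertex set [S : {set T}] with an
    adjacency relation [e : rel T] (edges only between vertices of S). *)
Section Graphs.
Variable T : finType.

Definition nbhd (e : rel T) (A : {set T}) : {set T} :=
  A :|: [set y | [exists x in A, e x y]].

Definition ball (e : rel T) (m : nat) (u : T) : {set T} := iter m (nbhd e) [set u].

(** shortest-path distance: least m with v reachable within m steps
    (any shortest path has length < #|T|; unreachable pairs, which do not
    occur in connected graphs, get #|T|) *)
Definition gdist (e : rel T) (u v : T) : nat :=
  find (fun m => v \in ball e m u) (iota 0 #|T|).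

(** Wiener index: sum over unordered pairs {u,v} of d(u,v),
    i.e. half the sum over ordered pairs (d(u,u) = 0, d symmetric). *)
Definition wiener (S : {set T}) (e : rel T) : nat :=
  (\sum_(u in S) \sum_(v in S) gdist e u v) %/ 2.
End Graphs.

(** * Chains of n hexagons.  Vertices are pairs (k, i): vertex i (0..5,
    in cyclic order) of hexagon H_k. *)
Definition vtx (n : nat) : finType := ('I_n * 'I_6)%type.

(** Chain data: c k = position (in H_k) and t k = position (in H_{k-1}) of the
    attachment for k = 1..n-1 (the value at k = 0 is irrelevant). *)
Definition chain_data (n : nat) : finType :=
  ({ffun 'I_n -> 'I_6} * {ffun 'I_n -> 'I_6})%type.

Definition cpos n (d : chain_data n) (k : 'I_n) : 'I_6 := d.1 k.
Definition tpos n (d : chain_data n) (k : 'I_n) : 'I_6 := d.2 k.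

Definition prevo n (k : 'I_n) : 'I_n :=
  Ordinal (leq_ltn_trans (leq_pred k) (ltn_ord k)).

(** the condition t_k <> c_{k-1} for k >= 2 (polyphenyl), equivalently
    each cut-vertex lies in exactly two hexagons and each hexagon has at most
    two cut-vertices (spiro) *)
Definition valid_chain n (d : chain_data n) : bool :=
  [forall k : 'I_n, (1 < k) ==> (tpos d k != cpos d (prevo k))].

Definition hexedge n (u v : vtx n) : bool :=
  (u.1 == v.1) &&
  ((val v.2 == (val u.2).+1 %% 6) || (val u.2 == (val v.2).+1 %% 6)).

Definition cutedge n (d : chain_data n) (u v : vtx n) : bool :=
  (0 < val u.1) && (u.2 == cpos d u.1) && (v == (prevo u.1, tpos d u.1)).

Definition poly_adj n (d : chain_data n) : rel (vtx n) :=
  fun u v => [|| hexedge u v, cutedge d u v | cutedge d v u].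

Definition W_poly n (d : chain_data n) : nat := wiener [set: vtx n] (poly_adj d).

(** hexagonal squeeze: contract each cut-edge c_k t_k to the vertex t_k *)
Definition rep n (d : chain_data n) (x : vtx n) : vtx n :=
  if (0 < val x.1) && (x.2 == cpos d x.1) then (prevo x.1, tpos d x.1) else x.

Definition spiro_vertices n (d : chain_data n) : {set vtx n} :=
  [set x | rep d x == x].

Definition spiro_adj n (d : chain_data n) : rel (vtx n) :=
  fun u v => [exists x, exists y, [&& hexedge x y, rep d x == u & rep d y == v]].

Definition W_spiro n (d : chain_data n) : nat :=
  wiener (spiro_vertices d) (spiro_adj d).

Definition poly_W_values n : seq nat :=
  [seq W_poly d | d <- enum (chain_data n) & valid_chain d].
Definition spiro_W_values n : seq nat :=
  [seq W_spiro d | d <- enum (chain_data n) & valid_chain d].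

Definition kth_min (k : nat) (s : seq nat) (w : nat) : bool :=
  (w \in s) && (size (undup [seq x <- s | x < w]) == k.-1).
Definition kth_max (k : nat) (s : seq nat) (w : nat) : bool :=
  (w \in s) && (size (undup [seq x <- s | w < x]) == k.-1).

(* Main.v *)
Require Import Defs.
From mathcomp Require Import all_boot zify.
Set Implicit Arguments. Unset Strict Implicit. Unset Printing Implicit Defensive.

Lemma find_iota_eq (P : pred nat) N : forall m x, x < N -> P (m + x) ->
  (forall y, y < x -> ~~ P (m + y)) -> find P (iota m N) = x.
Proof.
elim: N => [//|N IH] m x hx hP hlt /=.
case: x hx hP hlt => [|x] hx hP hlt; first by rewrite addn0 in hP; rewrite hP.
have := hlt 0 isT; rewrite addn0 => /negbTE ->.
rewrite (IH m.+1 x) //; first by rewrite addSn -addnS.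
by move=> y hy; rewrite addSn -addnS; apply: hlt.
Qed.

Section BallD.
Variable T : finType.
Variable e : rel T.
Variable u : T.
Variable D : T -> nat.
Variable B : nat.
Hypothesis D0 : D u = 0.
Hypothesis D0u : forall v, D v = 0 -> v = u.
Hypothesis Dlip : forall x v, e x v -> D v <= (D x).+1.
Hypothesis Dpred : forall v, 0 < D v < B -> exists x, e x v /\ (D x).+1 = D v.

Lemma ball_D m : m < B -> forall v, (v \in ball e m u) = (D v <= m).
Proof.
elim: m => [_|m IH hm] v.
  rewrite /ball /= in_set1; apply/eqP/idP => [->|]; first by rewrite D0.
  by rewrite leqn0 => /eqP /D0u.
rewrite /ball iterS -/(ball e m u) /nbhd in_setU in_set.
rewrite IH ?(ltnW hm) //.
apply/idP/idP.
  case/orP => [h|/existsP [x /andP [hx hxv]]]; first by rewrite (leq_trans h).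
  by rewrite IH ?(ltnW hm) // in hx; apply: leq_trans (Dlip hxv) _.
move=> h; case: (leqP (D v) m) => [hle|hlt].
  by apply/orP; left.
have hv : D v = m.+1 by apply/eqP; rewrite eqn_leq h hlt.
have [x [hxv hx]] : exists x, e x v /\ (D x).+1 = D v by apply: Dpred; rewrite hv /= hm.
apply/orP; right; apply/existsP; exists x; rewrite hxv andbT IH ?(ltnW hm) //.
by move: hx; rewrite hv => -[->].
Qed.

Lemma gdist_D v : B <= #|T| -> D v < B -> gdist e u v = D v.
Proof.
move=> hB hv; rewrite /gdist; apply: find_iota_eq.
- exact: leq_trans hv hB.
- by rewrite add0n ball_D.
- by move=> y hy; rewrite add0n ball_D ?(ltn_trans hy) // -ltnNge.
Qed.
End BallD.

Definition cyc (a b : 'I_6) : nat := let x := (a + 6 - b) %% 6 in minn x (6 - x).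
Definition adj6 (b b' : 'I_6) : bool :=
  (val b' == (val b).+1 %% 6) || (val b == (val b').+1 %% 6).

Ltac ord6 x := case: x => [[|[|[|[|[|[|//]]]]]] ?].

Lemma cyc_sym a b : cyc a b = cyc b a.
Proof. by ord6 a; ord6 b. Qed.
Lemma cyc_le3 a b : cyc a b <= 3.
Proof. by ord6 a; ord6 b. Qed.
Lemma cyc0 a b : (cyc a b == 0) = (a == b).
Proof. by ord6 a; ord6 b. Qed.
Lemma cycxx a : cyc a a = 0.
Proof. by apply/eqP; rewrite cyc0. Qed.
Lemma cyc_lip a b b' : adj6 b b' -> cyc a b' <= (cyc a b).+1.
Proof. by ord6 a; ord6 b; ord6 b'. Qed.
Lemma cyc_pred a b : a != b -> exists b', adj6 b' b /\ (cyc a b').+1 = cyc a b.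
Proof.

ord6 a; ord6 b => // _;
  first [ by exists (@Ordinal 6 0 isT)
        | by exists (@Ordinal 6 1 isT)
        | by exists (@Ordinal 6 2 isT)
        | by exists (@Ordinal 6 3 isT)
        | by exists (@Ordinal 6 4 isT)
        | by exists (@Ordinal 6 5 isT) ].
Qed.
Lemma cyc_sum a : \sum_b cyc a b = 9.
Proof. by rewrite !big_ord_recr big_ord0 /=; ord6 a. Qed.
Lemma cyc_sum' a : \sum_b cyc b a = 9.
Proof. by rewrite -(cyc_sum a); apply: eq_bigr => b _; rewrite cyc_sym. Qed.

Section Chain.
Variable n : nat.
Variable d : chain_data n.

Definition cn (k : nat) : 'I_6 := odflt ord0 (omap (cpos d) (insub k)).
Definition tn (k : nat) : 'I_6 := odflt ord0 (omap (tpos d) (insub k)).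
Lemma cnE (k : 'I_n) : cn k = cpos d k. Proof. by rewrite /cn valK. Qed.
Lemma tnE (k : 'I_n) : tn k = tpos d k. Proof. by rewrite /tn valK. Qed.

Definition lk (k : nat) : nat := cyc (cn k) (tn k.+1).
Definition M (i j : nat) : nat := \sum_(i.+1 <= k < j) lk k.
Definition al i a := cyc a (tn i.+1).
Definition be j b := cyc (cn j) b.

Definition Dn (w i : nat) (a : 'I_6) (j : nat) (b : 'I_6) : nat :=
  if i == j then cyc a b
  else if i < j then al i a + w * (j - i) + M i j + be j b
  else al j b + w * (i - j) + M j i + be i a.

Definition ent (i : nat) (a : 'I_6) (k : nat) : 'I_6 :=
  if k == i then a else if i < k then cn k else tn k.+1.

Lemma Dn_ent w i a k b : Dn w i a k b = Dn w i a k (ent i a k) + cyc (ent i a k) b.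
Proof.
rewrite /Dn /ent; case: (boolP (i == k)) => [/eqP <-|hik]; first by rewrite !eqxx cycxx.
have hki : (k == i) = false by rewrite eq_sym (negbTE hik).
rewrite hki; case: ltnP => h; first by rewrite /be cycxx addn0.
by rewrite /al cycxx [cyc b _]cyc_sym; lia.
Qed.
Lemma Dn_lip w i a k b b' : adj6 b b' -> Dn w i a k b' <= (Dn w i a k b).+1.
Proof.
move=> h; rewrite (Dn_ent w i a k b) (Dn_ent w i a k b') -addnS leq_add2l.
exact: cyc_lip.
Qed.

Lemma Dn_pred w i a k b : b != ent i a k ->
  exists b', adj6 b' b /\ (Dn w i a k b').+1 = Dn w i a k b.
Proof.
rewrite eq_sym => h; have [b' [h1 h2]] := cyc_pred h.
exists b'; split=> //.
by rewrite (Dn_ent w i a k b) (Dn_ent w i a k b') -h2 addnS.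
Qed.

Lemma M_empty i : M i i.+1 = 0.
Proof. by rewrite /M big_geq. Qed.
Lemma M_recr i k : i < k -> M i k.+1 = M i k + lk k.
Proof. by move=> h; rewrite /M big_nat_recr. Qed.
Lemma M_recl i k : i.+1 < k -> M i k = lk i.+1 + M i.+1 k.
Proof. by move=> h; rewrite /M big_ltn. Qed.

Lemma Dn_cross_lt w i a k : 0 < k -> i < k -> Dn w i a k (cn k) = Dn w i a k.-1 (tn k) + w.
Proof.
case: k => // k _ hik /=; rewrite /Dn.
have -> : (i == k.+1) = false by apply/negbTE; lia.
rewrite hik /be cycxx addn0.
case: (boolP (i == k)) => [/eqP ->|hne]; first by rewrite /al M_empty subSnn; lia.
have hlt : i < k by lia.
by rewrite hlt M_recr // /lk /al subSn //; lia.
Qed.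

Lemma Dn_cross_ge w i a k : 0 < k -> k <= i -> Dn w i a k.-1 (tn k) = Dn w i a k (cn k) + w.
Proof.
case: k => // k _ hik /=; rewrite /Dn.
have -> : (i == k) = false by apply/negbTE; lia.
have -> : (i < k) = false by apply/negbTE; lia.
rewrite /al cycxx add0n.
case: (boolP (i == k.+1)) => [/eqP ->|hne]; first by rewrite M_empty subSnn /be cyc_sym; lia.
have -> : (i < k.+1) = false by apply/negbTE; lia.
by rewrite (M_recl (k:=i)) ?subSn /lk; lia.
Qed.

Lemma Dn_sym w i a j b : Dn w i a j b = Dn w j b i a.
Proof.
rewrite /Dn eq_sym; case: (boolP (j == i)) => [_|hne]; first exact: cyc_sym.
case: (ltngtP i j) => h //; try lia.
Qed.

Lemma M_le i j : M i j <= 3 * j.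
Proof.
apply: (@leq_trans (\sum_(i.+1 <= k < j) 3)).
  by apply: leq_sum => k _; apply: cyc_le3.
rewrite sum_nat_const_nat; lia.
Qed.

Lemma Dn_bound w i a j b : w <= 1 -> i < n -> j < n -> 4 <= n -> Dn w i a j b < 6 * n.
Proof.
move=> hw hi hj hn; rewrite /Dn.
have := cyc_le3 a b; have := M_le i j; have := M_le j i.
have := cyc_le3 a (tn i.+1); have := cyc_le3 b (tn j.+1).
have := cyc_le3 (cn j) b; have := cyc_le3 (cn i) a.
rewrite /al /be.
have h1 : w * (j - i) <= n by nia.
have h2 : w * (i - j) <= n by nia.
case: (i == j) => //; first by lia.
case: (i < j); lia.
Qed.
End Chain.

Section Vtx.
Variable n : nat.
Variable d : chain_data n.
Hypothesis hn : 4 <= n.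
Hypothesis hd : valid_chain d.

Definition Dg w (u v : vtx n) : nat := Dn d w u.1 u.2 v.1 v.2.

Lemma card_vtx : #|vtx n| = 6 * n.
Proof. by rewrite card_prod !card_ord mulnC. Qed.

Lemma prevoE (k : 'I_n) : val (prevo k) = k.-1. Proof. by []. Qed.

Lemma hexedge_adj (x v : vtx n) : hexedge x v -> x.1 = v.1 /\ adj6 x.2 v.2.
Proof. by case/andP => /eqP -> h. Qed.

Lemma cutedgeE (x v : vtx n) : cutedge d x v ->
  [/\ 0 < val x.1, x.2 = cn d x.1 & v = (prevo x.1, tn d x.1)].
Proof. by case/andP => /andP [h1 /eqP h2] /eqP h3; rewrite cnE tnE. Qed.

Lemma Dg_poly_lip u x v : poly_adj d x v -> Dg 1 u v <= (Dg 1 u x).+1.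
Proof.
rewrite /poly_adj /Dg; case/or3P.
- by case/hexedge_adj => <- h; apply: Dn_lip.
- case/cutedgeE => h0 hx ->; rewrite /= hx.
  case: (ltnP u.1 x.1) => h.
    by rewrite (Dn_cross_lt _ _ _ h0 h) addn1 leqW.
  by rewrite (Dn_cross_ge _ _ _ h0 h) addn1.
- case/cutedgeE => h0 hv hx; rewrite hv hx /=.
  case: (ltnP u.1 v.1) => h.
    by rewrite (Dn_cross_lt _ _ _ h0 h) addn1.
  by rewrite (Dn_cross_ge _ _ _ h0 h) addn1 leqW.
Qed.

Lemma Dg_poly_pred u v : 0 < Dg 1 u v -> exists x, poly_adj d x v /\ (Dg 1 u x).+1 = Dg 1 u v.
Proof.
case: u v => i a [j b]; rewrite /Dg /= => hpos.
case: (boolP (b == ent d i a j)) => [/eqP hb|hb]; last first.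
  have [b' [h1 h2]] := Dn_pred 1 hb; exists (j, b'); split => //.
  by apply/orP; left; rewrite /hexedge /= eqxx; exact: h1.
have hji : val j != val i.
  apply/negP => /eqP hji; move: hpos; rewrite hb /ent hji eqxx /Dn eqxx cycxx.
  by [].
case: (ltngtP i j) => hij; last by move: hji => /= /eqP; lia.
-
  have hbj : b = cn d j by move: hb; rewrite /ent (negbTE hji) hij.
  have h0 : 0 < val j := leq_ltn_trans (leq0n _) hij.
  exists (prevo j, tpos d j); split.
    apply/or3P; apply: Or33; rewrite /cutedge /= h0 -cnE -hbj eqxx /=.
    by [].
  rewrite hbj (Dn_cross_lt _ _ _ h0 hij) addn1 /= tnE.
  by [].
-
  have hbj : b = tn d j.+1 by move: hb; rewrite /ent (negbTE hji) ltnNge (ltnW hij).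
  have hk : j.+1 < n by apply: leq_ltn_trans hij (ltn_ord i).
  pose k := Ordinal hk.
  have hpk : prevo k = j by apply: val_inj.
  exists (k, cpos d k); split.
    apply/or3P; apply: Or32; rewrite /cutedge /= eqxx hpk hbj -(tnE d k) eqxx.
    by [].
  have := @Dn_cross_ge n d 1 i a k isT hij; rewrite /= -(cnE d k) hbj => ->.
  by rewrite addn1.
Qed.

Lemma Dg_xx w u : Dg w u u = 0.
Proof. by rewrite /Dg /Dn eqxx cycxx. Qed.

Lemma Dg_bound w u v : w <= 1 -> Dg w u v < 6 * n.
Proof. by move=> hw; apply: Dn_bound. Qed.

Lemma Dg_poly_0 u v : Dg 1 u v = 0 -> v = u.
Proof.
case: u v => [[i hi] a] [[j hj] b]; rewrite /Dg /Dn /=.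
case: (boolP (i == j)) => [/eqP hij|hne].
  move/eqP; rewrite cyc0 => /eqP ->; congr pair; exact: val_inj.
move: hne => /eqP hne; case: ltnP => h h2; exfalso; lia.
Qed.

Lemma gdist_poly u v : gdist (poly_adj d) u v = Dg 1 u v.
Proof.
apply: (@gdist_D _ _ _ _ (6 * n)).
- exact: Dg_xx.
- by move=> w /Dg_poly_0.
- by move=> x w; apply: Dg_poly_lip.
- by move=> w /andP [h _]; apply: Dg_poly_pred.
- by rewrite card_vtx.
- exact: Dg_bound.
Qed.

Lemma repE (y : vtx n) : rep d y =
  if (0 < val y.1) && (y.2 == cpos d y.1) then (prevo y.1, tpos d y.1) else y.
Proof. by []. Qed.

Lemma rep_Dg u y : Dg 0 u (rep d y) = Dg 0 u y.
Proof.
rewrite repE; case: ifP => // /andP [h0 /eqP h2].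
rewrite /Dg /= h2 -cnE -tnE.
case: (ltnP u.1 y.1) => h.
  by rewrite (Dn_cross_lt _ _ _ h0 h) addn0.
by rewrite (Dn_cross_ge _ _ _ h0 h) addn0.
Qed.

Lemma rep_rep y : rep d (rep d y) = rep d y.
Proof.
rewrite (repE y); case: ifP => [/andP [h0 /eqP h2]|hf]; last by rewrite repE hf.
rewrite repE /=.
case: (boolP (1 < val y.1)) => h1.
  have := forallP hd y.1; rewrite h1 /= => /negbTE ->.
  by rewrite andbF.
by have -> : (0 < (val y.1).-1) = false by apply/negbTE; lia.
Qed.

Lemma rep_S y : rep d y \in spiro_vertices d.
Proof. by rewrite inE rep_rep. Qed.

Lemma notS (v : vtx n) : 0 < val v.1 -> v.2 = cn d v.1 -> v \notin spiro_vertices d.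
Proof.
move=> h0 h2; rewrite inE repE h0 h2 cnE eqxx /=.
apply/negP => /eqP /(congr1 (fun z : vtx n => val z.1)) /= h.
by have := ltn_predL (val v.1); rewrite h0 h ltnn.
Qed.

Definition Ds (u v : vtx n) : nat :=
  if v \in spiro_vertices d then Dg 0 u v else 6 * n.

Lemma spiro_adjE x v : spiro_adj d x v ->
  exists x0 y0, [/\ hexedge x0 y0, rep d x0 = x & rep d y0 = v].
Proof.
case/existsP => x0 /existsP [y0 /and3P [h1 /eqP h2 /eqP h3]].
by exists x0, y0.
Qed.

Lemma Ds_lip u x v : spiro_adj d x v -> Ds u v <= (Ds u x).+1.
Proof.
case/spiro_adjE => x0 [y0 [he <- <-]].
rewrite /Ds !rep_S !rep_Dg /Dg.
by case/hexedge_adj: he => <- h; apply: Dn_lip.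
Qed.

Lemma Ds_0 u v : u \in spiro_vertices d -> Ds u v = 0 -> v = u.
Proof.
move=> hu; rewrite /Ds; case: ifP => hv; last by lia.
have key : forall u v : vtx n, v \in spiro_vertices d -> val u.1 < val v.1 ->
    Dg 0 u v != 0.
  move=> [[i hi] a] [[j hj] b] hv' /= hij; apply/negP => /eqP h0.
  move: h0; rewrite /Dg /Dn /=.
  have -> : (i == j) = false by apply/negbTE; lia.
  rewrite hij => h0.
  have hb : cyc (cn d j) b = 0 by rewrite /be in h0; lia.
  move/eqP: hb; rewrite cyc0 => /eqP hb.
  by move: hv'; rewrite (negbTE (@notS (Ordinal hj, b) _ _)) //=; lia.
case: (ltngtP (val u.1) (val v.1)) => h.
- by move/eqP; rewrite (negbTE (key u v hv h)).
- by rewrite /Dg Dn_sym -/(Dg 0 v u) => /eqP; rewrite (negbTE (key v u hu h)).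
- case: u v hu hv h => i a [j b] hu hv /= hij.
  rewrite /Dg /Dn /= hij eqxx => /eqP; rewrite cyc0 => /eqP ->.
  by congr pair; apply: val_inj.
Qed.

Lemma spiro_step (u y : vtx n) : y.2 != ent d u.1 u.2 y.1 ->
  exists x, spiro_adj d x (rep d y) /\ (Ds u x).+1 = Dg 0 u y.
Proof.
case: y => k b /= hb.
have [b' [h1 h2]] := Dn_pred 0 hb.
exists (rep d (k, b')); split.
  apply/existsP; exists (k, b'); apply/existsP; exists (k, b).
  by rewrite !eqxx /hexedge /= eqxx; move: h1; rewrite /adj6 => ->.
by rewrite /Ds rep_S rep_Dg.
Qed.

Lemma Ds_pred u v : u \in spiro_vertices d -> 0 < Ds u v < 6 * n ->
  exists x, spiro_adj d x v /\ (Ds u x).+1 = Ds u v.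
Proof.
move=> hu; rewrite /Ds; case: ifP => hv; last by rewrite ltnn andbF.
case/andP => hpos _.
have hrv : rep d v = v by apply/eqP; rewrite inE in hv.
case: (boolP (v.2 == ent d u.1 u.2 v.1)) => hb; last first.
  by have [x [h1 h2]] := spiro_step hb; exists x; rewrite -{1}hrv.
move: u v hu hv hpos hrv hb => [[i hi] a] [[j hj] b] hu hv hpos hrv /= /eqP hb.
have hij : i != j.
  apply/negP => /eqP hij; move: hpos; rewrite /Dg /Dn /= hij eqxx.
  by move: hb; rewrite /ent /= hij eqxx => ->; rewrite cycxx.
case: (ltngtP i j) => hlt; last by rewrite hlt eqxx in hij.
- exfalso; move: hv; apply/negP; apply: notS => /=; first by lia.
  by rewrite hb /ent /= eq_sym (negbTE hij) hlt.
- have hk : j.+1 < n by lia.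
  pose k := Ordinal hk.
  have hpk : prevo k = Ordinal hj by apply: val_inj.
  have hji2 : (j == i) = false by rewrite eq_sym (negbTE hij).
  have hbt : b = tpos d k by rewrite hb /ent hji2 ltnNge (ltnW hlt) /= -(tnE d k).
  have hry : rep d (k, cpos d k) = (Ordinal hj, b) by rewrite repE /= eqxx hpk hbt.
  have hne : cpos d k != ent d i a k.
    rewrite /ent /=.
    case: (boolP (j.+1 == i)) => [/eqP hji|hji].
      apply/negP => /eqP ha.
      move: hu; apply/negP; apply: (@notS (Ordinal hi, a)) => /=; first by lia.
      by rewrite -ha -hji -(cnE d k).
    have -> : (i < j.+1) = false by apply/negbTE; lia.
    have hk2 : j.+2 < n by lia.
    pose k2 := Ordinal hk2.
    have hpk2 : prevo k2 = k by apply: val_inj.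
    have := forallP hd k2; rewrite /= -(tnE d k2) hpk2 eq_sym.
    by [].
  have [x [h1 h2]] := @spiro_step (Ordinal hi, a) (k, cpos d k) hne.
  exists x; split; first by rewrite -hry.
  rewrite h2 -hry rep_Dg.
  by [].
Qed.

Lemma gdist_spiro u v : u \in spiro_vertices d -> v \in spiro_vertices d ->
  gdist (spiro_adj d) u v = Dg 0 u v.
Proof.
move=> hu hv.
have -> : Dg 0 u v = Ds u v by rewrite /Ds hv.
apply: (@gdist_D _ _ _ _ (6 * n)).
- by rewrite /Ds hu Dg_xx.
- by move=> w /Ds_0; apply.
- by move=> x w; apply: Ds_lip.
- by move=> w; apply: Ds_pred.
- by rewrite card_vtx.
- by rewrite /Ds hv; apply: Dg_bound.
Qed.
End Vtx.

Lemma sum_except (T : finType) (c : T) (G : T -> nat) :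
  \sum_x (if x != c then G x else 0) + G c = \sum_x G x.
Proof. by rewrite [RHS](bigD1 c) //= addnC -big_mkcond. Qed.

Lemma sym_sum (T : finType) (r : rel T)
  (hr : forall x y, r x y + r y x + (x == y) = 1) (F : T -> T -> nat)
  (hF : forall x y, F x y = F y x) :
  \sum_x \sum_y F x y = \sum_x F x x + 2 * \sum_x \sum_y (if r x y then F x y else 0).
Proof.
have e1 : forall x y, F x y = (if r x y then F x y else 0) + (if r y x then F x y else 0)
   + (if x == y then F x y else 0).
  move=> x y; have := hr x y.
  by case: (r x y); case: (r y x); case: (x == y) => /=; lia.
rewrite (eq_bigr (fun x => \sum_y ((if r x y then F x y else 0) + (if r y x then F x y else 0)
   + (if x == y then F x y else 0)))); last by move=> x _; apply: eq_bigr => y _; apply: e1.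
under eq_bigr => x _ do rewrite big_split /= big_split /=.
rewrite big_split /= big_split /=.
have -> : \sum_x \sum_y (if x == y then F x y else 0) = \sum_x F x x.
  apply: eq_bigr => x _; rewrite -big_mkcond /=.
  rewrite (eq_bigl (fun y => y == x)) ?big_pred1_eq // => y; exact: eq_sym.

have -> : \sum_x \sum_y (if r y x then F x y else 0) = \sum_x \sum_y (if r x y then F x y else 0).
  rewrite exchange_big /=; apply: eq_bigr => x _; apply: eq_bigr => y _.
  by rewrite hF.
lia.
Qed.

Lemma sum6 (K : nat) (G : 'I_6 -> nat) : \sum_b (K + G b) = 6 * K + \sum_b G b.
Proof. by rewrite big_split /= sum_nat_const card_ord. Qed.
Lemma sum6' (K : nat) (G : 'I_6 -> nat) : \sum_b (G b + K) = 6 * K + \sum_b G b.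
Proof. by rewrite big_split /= sum_nat_const card_ord addnC. Qed.

Section Sums.
Variable n : nat.
Variable d : chain_data n.
Hypothesis hn : 4 <= n.
Hypothesis hd : valid_chain d.

Definition inS (i : nat) (a : 'I_6) := ~~ ((0 < i) && (a == cn d i)).

Lemma inS_E (u : vtx n) : (u \in spiro_vertices d) = inS u.1 u.2.
Proof.
rewrite /inS cnE; case: (boolP ((0 < val u.1) && (u.2 == cpos d u.1))) => h.
  case/andP: h => h0 /eqP h2; apply/negbTE; apply: notS => //.
  by rewrite cnE.
by rewrite inE repE (negbTE h) eqxx.
Qed.

Definition PG i j := \sum_(a : 'I_6) \sum_(b : 'I_6) Dn d 1 i a j b.
Definition SG i j := \sum_(a : 'I_6) \sum_(b : 'I_6)
   (if inS i a && inS j b then Dn d 0 i a j b else 0).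

Lemma PG_sym i j : PG i j = PG j i.
Proof.
rewrite /PG exchange_big; apply: eq_bigr => a _; apply: eq_bigr => b _.
exact: Dn_sym.
Qed.

Lemma SG_sym i j : SG i j = SG j i.
Proof.
rewrite /SG exchange_big; apply: eq_bigr => a _; apply: eq_bigr => b _.
by rewrite andbC Dn_sym.
Qed.

Lemma PG_lt i j : i < j -> PG i j = 108 + 36 * ((j - i) + M d i j).
Proof.
move=> hij; rewrite /PG.
have hne : (i == j) = false by apply/negbTE; lia.
under eq_bigr => a _ do under eq_bigr => b _ do rewrite /Dn hne hij.
under eq_bigr => a _ do rewrite sum6 /be cyc_sum.
rewrite big_split /= -big_distrr /= sum6' sum6' /al cyc_sum' sum_nat_const card_ord mul1n; lia.
Qed.

Lemma PG_eq i : PG i i = 54.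
Proof.
rewrite /PG.
under eq_bigr => a _ do under eq_bigr => b _ do rewrite /Dn eqxx.
under eq_bigr => a _ do rewrite cyc_sum.
by rewrite sum_nat_const card_ord.
Qed.

Lemma sum_al i : \sum_(a : 'I_6) al d i a = 9.
Proof. exact: cyc_sum'. Qed.
Lemma sum_be j : \sum_(b : 'I_6) be d j b = 9.
Proof. exact: cyc_sum. Qed.

Lemma SG_inner i j a : i < j ->
  \sum_(b : 'I_6) (if inS i a && inS j b then Dn d 0 i a j b else 0)
  = if inS i a then 5 * (al d i a + M d i j) + 9 else 0.
Proof.
move=> hij; case: (inS i a); last by rewrite big1.
have hne : (i == j) = false by apply/negbTE; lia.
have hj : 0 < j by lia.
under eq_bigr => b _ do rewrite /= /inS hj /= /Dn hne hij.
have := sum_except (cn d j) (fun b => al d i a + 0 * (j - i) + M d i j + be d j b).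
rewrite /= sum6 sum_be {2}/be cycxx => h.
rewrite mul0n addn0 in h.
under eq_bigr => b _ do rewrite mul0n addn0.
apply/eqP; rewrite -(eqn_add2r (al d i a + M d i j + 0)) h; apply/eqP; lia.
Qed.

Lemma SG_lt0 j : 0 < j -> SG 0 j = 99 + 30 * M d 0 j.
Proof.
move=> hj; rewrite /SG.
under eq_bigr => a _ do rewrite SG_inner // /inS /=.
rewrite big_split /= -big_distrr /= sum6' sum_al sum_nat_const card_ord; lia.
Qed.

Lemma SG_lt i j : 0 < i -> i < j -> SG i j + 5 * lk d i = 90 + 25 * M d i j.
Proof.
move=> hi hij; rewrite /SG.
under eq_bigr => a _ do rewrite SG_inner // /inS hi /=.
have := sum_except (cn d i) (fun a => 5 * (al d i a + M d i j) + 9).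
rewrite /= big_split /= -big_distrr /= sum6' sum_al sum_nat_const card_ord.
rewrite /al -/(lk d i) => h.
have e : forall s, s + (5 * (lk d i + M d i j) + 9) = 5 * (6 * M d i j + 9) + 6 * 9 -> s + 5 * lk d i = 90 + 25 * M d i j by move=> s; lia.
exact: e h.
Qed.

Lemma SG_eq0 : SG 0 0 = 54.
Proof.
rewrite /SG /inS /=.
under eq_bigr => a _ do under eq_bigr => b _ do rewrite /Dn eqxx.
under eq_bigr => a _ do rewrite cyc_sum.
by rewrite sum_nat_const card_ord.
Qed.

Lemma SG_eq i : 0 < i -> SG i i = 36.
Proof.
move=> hi; rewrite /SG /inS hi /=.
under eq_bigr => a _ do under eq_bigr => b _ do rewrite /Dn eqxx.
have inner : forall a : 'I_6, \sum_(b : 'I_6) (if (a != cn d i) && (b != cn d i) then cyc a b else 0)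
   = if a != cn d i then 9 - cyc a (cn d i) else 0.
  move=> a; case: (a != cn d i); last by rewrite big1.
  have := sum_except (cn d i) (fun b => cyc a b); rewrite /= cyc_sum => h.
  have e : forall s c, s + c = 9 -> s = 9 - c by move=> s c; lia.
  exact: e _ _ h.
under eq_bigr => a _ do rewrite inner.
have := sum_except (cn d i) (fun a => 9 - cyc a (cn d i)).
rewrite /= cycxx.
have h2 : \sum_(a : 'I_6) (9 - cyc a (cn d i)) + \sum_(a : 'I_6) cyc a (cn d i) = 54.
  rewrite -big_split /=.
  rewrite (eq_bigr (fun _ => 9)); first by rewrite sum_nat_const card_ord.
  by move=> a _; have := cyc_le3 a (cn d i); lia.
rewrite cyc_sum' in h2.
move=> h3.
have e : forall s t, s + (9 - 0) = t -> t + 9 = 54 -> s = 36 by move=> s t; lia.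
exact: e _ _ h3 h2.
Qed.

Definition Ap (i j : nat) := 36 * (if i == 0 then 99 else 90).
Definition Bp (i j : nat) := 25 * (108 + 36 * (j - i)).
Definition Ad (i : nat) := 36 * 54.
Definition Bd (i : nat) := 25 * 54 + 36 * 18 * (0 < i).
Definition Xp (i j : nat) := if i == 0 then M d 0 j else 0.
Definition Yp (i j : nat) := if 0 < i then lk d i else 0.

Lemma pair_lt i j : i < j -> 25 * PG i j + Ap i j + 180 * Xp i j = 36 * SG i j + Bp i j + 180 * Yp i j.
Proof.
move=> hij; rewrite /Ap /Bp /Xp /Yp (PG_lt hij).
case: (posnP i) => [->|hi] /=.
  rewrite SG_lt0 //; lia.
have := SG_lt hi hij.
lia.
Qed.

Lemma pair_eq i : 25 * PG i i + Ad i = 36 * SG i i + Bd i.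
Proof.
rewrite PG_eq /Ad /Bd; case: (posnP i) => [->|hi]; first by rewrite SG_eq0.
by rewrite SG_eq // hi.
Qed.

Lemma lin2 (F G H : 'I_n -> 'I_n -> nat) (a b c : nat) :
  \sum_(i : 'I_n) \sum_(j : 'I_n) (a * F i j + b * G i j + c * H i j) =
  a * (\sum_i \sum_j F i j) + b * (\sum_i \sum_j G i j) + c * (\sum_i \sum_j H i j).
Proof.
rewrite !big_distrr /=.
rewrite -!big_split /=; apply: eq_bigr => i _.
by rewrite !big_distrr -!big_split.
Qed.

Lemma lin1 (F G : 'I_n -> nat) (a b : nat) :
  \sum_(i : 'I_n) (a * F i + b * G i) = a * (\sum_i F i) + b * (\sum_i G i).
Proof. by rewrite !big_distrr -big_split. Qed.

Definition PGt := \sum_(i : 'I_n) \sum_(j : 'I_n) PG i j.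
Definition SGt := \sum_(i : 'I_n) \sum_(j : 'I_n) SG i j.

Lemma ltr_ord : forall x y : 'I_n, (x < y) + (y < x) + (x == y) = 1.
Proof.
move=> x y; case: (ltngtP x y) => h.
- have -> : (x == y) = false by apply/negbTE/eqP => e; rewrite e ltnn in h.
  by [].
- have -> : (x == y) = false by apply/negbTE/eqP => e; rewrite e ltnn in h.
  by [].
- by rewrite (val_inj h) eqxx.
Qed.

Lemma sym_ord (F : nat -> nat -> nat) (hF : forall i j, F i j = F j i) :
  \sum_(i : 'I_n) \sum_(j : 'I_n) F i j =
  \sum_(i : 'I_n) F i i + 2 * \sum_(i : 'I_n) \sum_(j : 'I_n) ((i < j) * F i j).
Proof.
rewrite (@sym_sum _ (fun x y : 'I_n => x < y) ltr_ord (fun x y : 'I_n => F x y)) //.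
congr (_ + 2 * _); apply: eq_bigr => i _; apply: eq_bigr => j _.
by case: (i < j); rewrite ?mul1n ?mul0n.
Qed.

Lemma XY : \sum_(i : 'I_n) \sum_(j : 'I_n) ((i < j) * Xp i j) =
           \sum_(i : 'I_n) \sum_(j : 'I_n) ((i < j) * Yp i j).
Proof.
rewrite exchange_big [RHS]exchange_big /=; apply: eq_bigr => j _.
have n0 : 0 < n by lia.
have -> : \sum_(i : 'I_n) ((i < j) * Xp i j) = M d 0 j.
  rewrite (bigD1 (Ordinal n0)) //= big1 ?addn0; last first.
    move=> i /= hi; rewrite /Xp.
    have -> : (val i == 0) = false by apply/negbTE; apply: contra hi => /eqP hi; apply/eqP/val_inj.
    by rewrite muln0.
  rewrite /Xp /=; case: (posnP j) => [->|hj]; last by rewrite mul1n.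
  by rewrite /M big_geq.
rewrite /M (@big_nat_widen _ _ _ 1 j n) //; last by apply: ltnW.
rewrite big_geq_mkord big_mkcond /=; apply: eq_bigr => i _.
rewrite /Yp; case: (i < j); case: (0 < i); by rewrite ?mul1n ?mul0n.
Qed.

Definition C1 := \sum_(i : 'I_n) Ad i + 2 * \sum_(i : 'I_n) \sum_(j : 'I_n) ((i < j) * Ap i j).
Definition C2 := \sum_(i : 'I_n) Bd i + 2 * \sum_(i : 'I_n) \sum_(j : 'I_n) ((i < j) * Bp i j).

Lemma main_lin : 25 * PGt + C1 = 36 * SGt + C2.
Proof.
rewrite /PGt /SGt (sym_ord PG_sym) (sym_ord SG_sym) /C1 /C2.
have hd1 := lin1 (fun i : 'I_n => PG i i) (fun i : 'I_n => Ad i) 25 1.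
have hd2 := lin1 (fun i : 'I_n => SG i i) (fun i : 'I_n => Bd i) 36 1.
have hdeq : \sum_(i : 'I_n) (25 * PG i i + 1 * Ad i) = \sum_(i : 'I_n) (36 * SG i i + 1 * Bd i).
  by apply: eq_bigr => i _; rewrite !mul1n pair_eq.
have ho1 := lin2 (fun i j : 'I_n => (i < j) * PG i j) (fun i j : 'I_n => (i < j) * Ap i j)
   (fun i j : 'I_n => (i < j) * Xp i j) 25 1 180.
have ho2 := lin2 (fun i j : 'I_n => (i < j) * SG i j) (fun i j : 'I_n => (i < j) * Bp i j)
   (fun i j : 'I_n => (i < j) * Yp i j) 36 1 180.
have hoeq : \sum_(i : 'I_n) \sum_(j : 'I_n) (25 * ((i < j) * PG i j) + 1 * ((i < j) * Ap i j)
     + 180 * ((i < j) * Xp i j)) =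
   \sum_(i : 'I_n) \sum_(j : 'I_n) (36 * ((i < j) * SG i j) + 1 * ((i < j) * Bp i j)
     + 180 * ((i < j) * Yp i j)).
  apply: eq_bigr => i _; apply: eq_bigr => j _.
  case: (ltnP i j) => h; last by rewrite !muln0.
  by rewrite !mul1n pair_lt.
rewrite /= in hd1 hd2 ho1 ho2.
rewrite hd1 hd2 in hdeq; rewrite ho1 ho2 XY in hoeq.
have e : forall a b c d1 e1 f g h y, 25*a + 1*b = 36*c + 1*d1 -> 25*e1 + 1*f + 180*y = 36*g + 1*h + 180*y -> 25*(a+2*e1) + (b + 2*f) = 36*(c+2*g) + (d1 + 2*h) by move=> *; lia.
exact: e hdeq hoeq.
Qed.
End Sums.

Section Final.
Variable n : nat.
Hypothesis hn : 4 <= n.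

Lemma sum_vtx (f : vtx n -> nat) : \sum_u f u = \sum_(i : 'I_n) \sum_(a : 'I_6) f (i, a).
Proof. by rewrite pair_big /=; apply: eq_bigr => -[i a]. Qed.

Lemma sum_setT (f : vtx n -> nat) : \sum_(u in [set: vtx n]) f u = \sum_u f u.
Proof. by apply: eq_bigl => u; rewrite in_setT. Qed.

Section D.
Variable d : chain_data n.
Hypothesis hd : valid_chain d.

Lemma Wsum_poly : \sum_(u in [set: vtx n]) \sum_(v in [set: vtx n]) gdist (poly_adj d) u v
   = PGt d.
Proof.
rewrite sum_setT; under eq_bigr => u _ do rewrite sum_setT.
under eq_bigr => u _ do under eq_bigr => v _ do rewrite gdist_poly //.
rewrite sum_vtx /PGt; apply: eq_bigr => i _.
under eq_bigr => a _ do rewrite sum_vtx.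
by rewrite exchange_big.
Qed.

Lemma Wsum_spiro : \sum_(u in spiro_vertices d) \sum_(v in spiro_vertices d)
   gdist (spiro_adj d) u v = SGt d.
Proof.
have e1 : \sum_(u in spiro_vertices d) \sum_(v in spiro_vertices d) gdist (spiro_adj d) u v =
   \sum_u \sum_v (if (u \in spiro_vertices d) && (v \in spiro_vertices d) then Dg d 0 u v else 0).
  rewrite big_mkcond; apply: eq_bigr => u _.
  case: ifP => hu; last by rewrite big1.
  rewrite big_mkcond; apply: eq_bigr => v _.
  by case: ifP => hv //=; rewrite gdist_spiro.
rewrite e1 sum_vtx /SGt; apply: eq_bigr => i _.
under eq_bigr => a _ do rewrite sum_vtx.
rewrite exchange_big; apply: eq_bigr => j _; apply: eq_bigr => a _; apply: eq_bigr => b _.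
by rewrite !inS_E.
Qed.

Lemma W_poly2 : 2 * W_poly d = PGt d.
Proof.
rewrite /W_poly /wiener Wsum_poly /PGt (sym_ord n (PG_sym d)).
have -> : \sum_(i : 'I_n) PG d i i = 2 * \sum_(i : 'I_n) 27.
  by rewrite big_distrr; apply: eq_bigr => i _; rewrite PG_eq.
by rewrite -mulnDr mulKn.
Qed.

Lemma W_spiro2 : 2 * W_spiro d = SGt d.
Proof.
rewrite /W_spiro /wiener Wsum_spiro /SGt (sym_ord n (SG_sym d)).
have -> : \sum_(i : 'I_n) SG d i i = 2 * \sum_(i : 'I_n) (if 0 < val i then 18 else 27).
  rewrite big_distrr; apply: eq_bigr => i _.
  by case: (posnP i) => [->|hi]; rewrite ?SG_eq0 ?(SG_eq hn hd hi).
by rewrite -mulnDr mulKn.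
Qed.

Lemma W_lin : 50 * W_poly d + C1 n = 72 * W_spiro d + C2 n.
Proof.
have := main_lin hn hd; rewrite -W_poly2 -W_spiro2.
have e : forall a b c1 c2, 25 * (2 * a) + c1 = 36 * (2 * b) + c2 -> 50 * a + c1 = 72 * b + c2.
  by move=> *; lia.
exact: e.
Qed.
End D.
End Final.

Lemma undup_size_map (X : eqType) (f g : X -> nat) (t : seq X) :
  {in t &, forall x y, (f x == f y) = (g x == g y)} ->
  size (undup (map f t)) = size (undup (map g t)).
Proof.
elim: t => //= x t IH H.
have H' : {in t &, forall x y, (f x == f y) = (g x == g y)}.
  by move=> y z hy hz; apply: H; rewrite inE ?hy ?hz orbT.
have -> : (f x \in map f t) = (g x \in map g t).
  apply/mapP/mapP => -[y hy e]; exists y => //; apply/eqP.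
    by rewrite -H ?inE ?eqxx ?hy ?orbT //; apply/eqP.
  by rewrite H ?inE ?eqxx ?hy ?orbT //; apply/eqP.
by case: ifP => _ //=; rewrite IH.
Qed.

Section Fin.
Variable n : nat.
Hypothesis hn : 4 <= n.

Definition VL := [seq d <- enum (chain_data n) | valid_chain d].

Lemma W_cmp (d d' : chain_data n) : valid_chain d -> valid_chain d' ->
  ((W_poly d < W_poly d') = (W_spiro d < W_spiro d')) /\
  ((W_poly d == W_poly d') = (W_spiro d == W_spiro d')).
Proof.
move=> h h'; have e1 := W_lin hn h; have e2 := W_lin hn h'.
by split; apply/idP/idP => hh; lia.
Qed.

Lemma inVL d : (d \in VL) = valid_chain d.
Proof. by rewrite mem_filter mem_enum andbT. Qed.

Lemma kth_gen (rel0 : nat -> nat -> bool) (k : nat) (d : chain_data n) :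
  valid_chain d ->
  (forall d1 d2 : chain_data n, valid_chain d1 -> valid_chain d2 ->
      rel0 (W_poly d1) (W_poly d2) = rel0 (W_spiro d1) (W_spiro d2)) ->
  ((W_poly d \in map (@W_poly n) VL) && (size (undup [seq x <- map (@W_poly n) VL | rel0 x (W_poly d)]) == k.-1)) =
  ((W_spiro d \in map (@W_spiro n) VL) && (size (undup [seq x <- map (@W_spiro n) VL | rel0 x (W_spiro d)]) == k.-1)).
Proof.
move=> hd hrel.
have hin : d \in VL by rewrite inVL.
rewrite !(map_f _ hin) /= !filter_map.
rewrite (@eq_in_filter _ (preim (@W_poly n) (rel0^~ (W_poly d))) (preim (@W_spiro n) (rel0^~ (W_spiro d)))).
  rewrite (@undup_size_map _ (@W_poly n) (@W_spiro n)) //.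
  move=> x y; rewrite !mem_filter => /andP [_ hx] /andP [_ hy].
  by case/andP: hx => hx _; case/andP: hy => hy _; case: (W_cmp hx hy).
by move=> x; rewrite inVL => hx /=; apply: hrel.
Qed.
End Fin.

Theorem theorem4p2 (n : nat) (hn : 4 <= n) (d : chain_data n)
    (hd : valid_chain d) (k : nat) (hk : 1 <= k <= 3) :
  (kth_min k (poly_W_values n) (W_poly d) <->
   kth_min k (spiro_W_values n) (W_spiro d)) /\
  (kth_max k (poly_W_values n) (W_poly d) <->
   kth_max k (spiro_W_values n) (W_spiro d)).
Proof.
rewrite /kth_min /kth_max /poly_W_values /spiro_W_values -/(VL n).
split.
  rewrite (@kth_gen n hn (fun x y => x < y)) //.
  by move=> d1 d2 h1 h2; case: (W_cmp hn h1 h2).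
rewrite (@kth_gen n hn (fun x y => y < x)) //.
by move=> d1 d2 h1 h2; case: (W_cmp hn h2 h1).
Qed.
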